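(* Let $U\colon[0,1]^2\to[0,1]$ be a uninorm with neutral element $e\in(0,1)$ such that $U\in\mathcal U$ and $U\in\mathcal N_{\min}$ (respectively $U\in\mathcal N_{\max}$). If $U$ has no idempotent points in $(e,1)$ (respectively in $(0,e)$), then $U$ is irreducible with respect to the ordinal sum construction.
   Context: A uninorm is a commutative, associative binary operation on $[0,1]$, non-decreasing in each variable, with a neutral element; ''broad sense'' allows neutral element $e\in[0,1]$ (t-norm if $e=1$, t-conorm if $e=0$), and a proper uninorm has $e\in(0,1)$. Conjunctive: $U(1,0)=0$; disjunctive: $U(1,0)=1$. Underlying t-norm $T_U(x,y)=U(ex,ey)/e$, underlying t-conorm $C_U(x,y)=(U(e+(1-e)x,e+(1-e)y)-e)/(1-e)$. $\mathcal U$: uninorms with continuous $T_U$ and $C_U$. $\mathcal N$: uninorms $V$ with $V(x,0)=0$ for all $x\in[0,1)$ and $V(x,1)=1$ for all $x\in(0,1]$. $\mathcal U_{\min}$ ($\mathcal U_{\max}$): uninorms $U_1$ with neutral element $e_1$ such that $U_1(x,y)=\min(x,y)$ (resp. $\max(x,y)$) for all $(x,y)\in[0,1]^2\setminus([0,e_1]^2\cup[e_1,1]^2)$. $\mathcal N_{\min}$ ($\mathcal N_{\max}$): uninorms $U\in\mathcal N$ for which there is $U_1\in\mathcal U_{\min}$ ($U_1\in\mathcal U_{\max}$) with $U=U_1$ on $(0,1)^2$. An idempotent point of $U$ is $x$ with $U(x,x)=x$. Ordinal sum construction: transformation: for a uninorm $W$ with neutral $e'$, $0\le a\le b<c\le d\le1$,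 $v\in[b,c]$: $f(x)=a+(b-a)x/e'$ on $[0,e')$, $f(e')=v$, $f(x)=d-(1-x)(d-c)/(1-e')$ on $(e',1]$; $W^{a,b,c,d}_v(x,y)=f(W(f^{-1}(x),f^{-1}(y)))$ on $([a,b)\cup\{v\}\cup(c,d])^2$ (if $a=b$, resp. $c=d$, only the part on $[e',1]^2$, resp. $[0,e']^2$, is transported). Data: $K$ countable; $((a_k,b_k))_k$ pairwise disjoint open (possibly empty) subintervals of $[0,e]$ with $\bigcup_k[a_k,b_k]=[0,e]$, $((c_k,d_k))_k$ likewise in $[e,1]$ with $\bigcup_k[c_k,d_k]=[e,1]$; $b_k\le a_i\iff c_k\ge d_i$ for all $i,k$; $U_k$ a proper uninorm if both intervals non-empty, a t-norm or proper uninorm if $(a_k,b_k)\ne\emptyset$, a t-conorm or proper uninorm if $(c_k,d_k)\ne\emptyset$; if both are empty there is no $k_1\ne k$ with $a_k=b_k=a_{k_1}=b_{k_1}$, $c_k=d_k=c_{k_1}=d_{k_1}$. $B=\{b_k\}\setminus\{a_k\}$, $C=\{c_k\}\setminus\{d_k\}$, $n(b_k)=b_k$ if $U_k(1,0)=0$ else $c_k$; $v_k=c_k$ (resp. $b_k$) if some $i$ has $b_k=a_i$ with $U_i$ disjunctive (resp. conjunctive), $v_k=n(b_k)$ if $b_k\in B,c_k\in C$, $v_k=b_k$ if $b_k\in B,c_k\notin C$, $v_k=c_k$ if $b_k\notin B,c_k\in C$. The ordinal sum $(\langle a_k,b_k,c_k,d_k,U_k\rangle\mid k\in K)^e$ is: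 $y$ if $x=e$; $x$ if $y=e$; $(U_k)^{a_k,b_k,c_k,d_k}_{v_k}(x,y)$ on $([a_k,b_k)\cup(c_k,d_k])^2$; $x$ if $y\in[b_k,c_k]$, $x\in[a_k,d_k]\setminus[b_k,c_k]$; $y$ symmetrically; $\min(x,y)$ if $(x,y)\in[b_k,c_k]^2\setminus((b_k,c_k)^2\cup\{(b_k,c_k),(c_k,b_k)\})$, $b_k\in B,c_k\in C$, $x+y<b_k+c_k$; $\max(x,y)$ likewise with $x+y>b_k+c_k$; $n(b_k)$ at $(b_k,c_k),(c_k,b_k)$ when $b_k\in B,c_k\in C$; $\min(x,y)$ on $\{b_k\}\times[b_k,c_k]\cup[b_k,c_k]\times\{b_k\}$ when $b_k\in B,c_k\notin C$; $\max(x,y)$ on $\{c_k\}\times[b_k,c_k]\cup[b_k,c_k]\times\{c_k\}$ when $b_k\notin B,c_k\in C$. A summand is empty if $a_k=b_k$ and $c_k=d_k$. A uninorm $U$ with neutral element $e$ is irreducible with respect to the ordinal sum construction if it can be expressed only as a trivial ordinal sum, i.e., in every representation of $U$ as such an ordinal sum the only non-empty summand is defined on $([0,e)\cup(e,1])^2$, i.e. on all of $[0,1]^2$. *)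

(* Defs.v *)
From Stdlib Require Import Reals.
Open Scope R_scope.

Definition inI (x : R) : Prop := 0 <= x <= 1.

(* U is a uninorm (broad sense) with neutral element e: operation on [0,1]. *)
Definition uninorm (U : R -> R -> R) (e : R) : Prop :=
  inI e /\
  (forall x y, inI x -> inI y -> inI (U x y)) /\
  (forall x y, inI x -> inI y -> U x y = U y x) /\
  (forall x y z, inI x -> inI y -> inI z -> U (U x y) z = U x (U y z)) /\
  (forall x x' y, inI x -> inI x' -> inI y -> x <= x' -> U x y <= U x' y) /\
  (forall x y y', inI x -> inI y -> inI y' -> y <= y' -> U x y <= U x y') /\
  (forall x, inI x -> U e x = x /\ U x e = x).

Definition conjunctive (U : R -> R -> R) : Prop := U 1 0 = 0.
Definition disjunctive (U : R -> R -> R) : Prop := U 1 0 = 1.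

Definition continuous_on_unit_square (F : R -> R -> R) : Prop :=
  forall x y, inI x -> inI y -> forall eps, 0 < eps ->
    exists delta, 0 < delta /\
      forall x' y', inI x' -> inI y' -> Rabs (x' - x) < delta -> Rabs (y' - y) < delta ->
        Rabs (F x' y' - F x y) < eps.

Definition underlying_tnorm (U : R -> R -> R) (e : R) : R -> R -> R :=
  fun x y => U (e * x) (e * y) / e.
Definition underlying_tconorm (U : R -> R -> R) (e : R) : R -> R -> R :=
  fun x y => (U (e + (1 - e) * x) (e + (1 - e) * y) - e) / (1 - e).

Definition in_calU (U : R -> R -> R) (e : R) : Prop :=
  continuous_on_unit_square (underlying_tnorm U e) /\
  continuous_on_unit_square (underlying_tconorm U e).

Definition in_calN (U : R -> R -> R) : Prop :=
  (forall x, 0 <= x < 1 -> U x 0 = 0) /\ (forall x, 0 < x <= 1 -> U x 1 = 1).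

Definition in_Umin (U1 : R -> R -> R) (e1 : R) : Prop :=
  uninorm U1 e1 /\
  forall x y, inI x -> inI y ->
    ~ ((x <= e1 /\ y <= e1) \/ (e1 <= x /\ e1 <= y)) -> U1 x y = Rmin x y.
Definition in_Umax (U1 : R -> R -> R) (e1 : R) : Prop :=
  uninorm U1 e1 /\
  forall x y, inI x -> inI y ->
    ~ ((x <= e1 /\ y <= e1) \/ (e1 <= x /\ e1 <= y)) -> U1 x y = Rmax x y.

Definition in_Nmin (U : R -> R -> R) : Prop :=
  in_calN U /\ exists U1 e1, in_Umin U1 e1 /\
    forall x y, 0 < x < 1 -> 0 < y < 1 -> U x y = U1 x y.
Definition in_Nmax (U : R -> R -> R) : Prop :=
  in_calN U /\ exists U1 e1, in_Umax U1 e1 /\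
    forall x y, 0 < x < 1 -> 0 < y < 1 -> U x y = U1 x y.

Definition idempotent_point (U : R -> R -> R) (x : R) : Prop := U x x = x.

(* inverse of the transformation f, on [a,b) \cup (c,d] *)
Definition tr_inv (e' a b c d x : R) : R :=
  if Rlt_dec x b then e' * (x - a) / (b - a)
  else 1 - (d - x) * (1 - e') / (d - c).

Definition tr_fwd (e' a b c d v z : R) : R :=
  if Rlt_dec z e' then a + (b - a) * z / e'
  else if Req_EM_T z e' then v
  else d - (1 - z) * (d - c) / (1 - e').

Definition transport (W : R -> R -> R) (e' a b c d v x y : R) : R :=
  tr_fwd e' a b c d v (W (tr_inv e' a b c d x) (tr_inv e' a b c d y)).

Section OS.
Variables (e : R) (K : nat -> Prop) (a b c d : nat -> R)
          (W : nat -> R -> R -> R) (ew : nat -> R) (v : nat -> R).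

(* admissible data of an ordinal sum with neutral element e;
   K \subseteq nat is the (countable) index set, W k is U_k with neutral element ew k *)
Definition os_data_ok : Prop :=
  (forall k, K k -> 0 <= a k <= b k /\ b k <= e) /\
  (forall k, K k -> e <= c k <= d k /\ d k <= 1) /\
  (forall k i, K k -> K i -> k <> i -> forall x, ~ ((a k < x < b k) /\ (a i < x < b i))) /\
  (forall k i, K k -> K i -> k <> i -> forall x, ~ ((c k < x < d k) /\ (c i < x < d i))) /\
  (forall x, 0 <= x <= e -> exists k, K k /\ a k <= x <= b k) /\
  (forall x, e <= x <= 1 -> exists k, K k /\ c k <= x <= d k) /\
  (forall i k, K i -> K k -> (b k <= a i <-> d i <= c k)) /\
  (forall k, K k ->
     uninorm (W k) (ew k) /\
     (a k < b k -> c k < d k -> 0 < ew k < 1) /\   (* proper uninorm *)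
     (a k < b k -> 0 < ew k) /\                    (* t-norm or proper uninorm *)
     (c k < d k -> ew k < 1)) /\                   (* t-conorm or proper uninorm *)
  (forall k k1, K k -> K k1 -> k <> k1 -> a k = b k -> c k = d k ->
     ~ (a k1 = b k1 /\ c k1 = d k1 /\ a k = a k1 /\ c k = c k1)).

Definition inB (x : R) : Prop :=
  (exists k, K k /\ b k = x) /\ ~ (exists k, K k /\ a k = x).
Definition inC (x : R) : Prop :=
  (exists k, K k /\ c k = x) /\ ~ (exists k, K k /\ d k = x).

Definition nval (k : nat) : R := if Req_EM_T (W k 1 0) 0 then b k else c k.

Definition v_ok : Prop :=
  forall k, K k ->
    let P1 := exists i, K i /\ b k = a i /\ disjunctive (W i) in
    let P2 := exists i, K i /\ b k = a i /\ conjunctive (W i) in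
    b k <= v k <= c k /\
    (P1 -> v k = c k) /\
    (~ P1 -> P2 -> v k = b k) /\
    (~ P1 -> ~ P2 -> inB (b k) -> inC (c k) -> v k = nval k) /\
    (~ P1 -> ~ P2 -> inB (b k) -> ~ inC (c k) -> v k = b k) /\
    (~ P1 -> ~ P2 -> ~ inB (b k) -> inC (c k) -> v k = c k).

Definition inHalf (k : nat) (x : R) : Prop := (a k <= x < b k) \/ (c k < x <= d k).

Definition sq_edge (k : nat) (x y : R) : Prop :=
  b k <= x <= c k /\ b k <= y <= c k /\ ~ (b k < x < c k /\ b k < y < c k) /\
  ~ (x = b k /\ y = c k) /\ ~ (x = c k /\ y = b k).

Definition is_ordinal_sum (U : R -> R -> R) : Prop :=
  forall x y, inI x -> inI y ->
   (x = e -> U x y = y) /\ (y = e -> U x y = x) /\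
   forall k, K k ->
    (inHalf k x -> inHalf k y ->
       U x y = transport (W k) (ew k) (a k) (b k) (c k) (d k) (v k) x y) /\
    (b k <= y <= c k -> a k <= x <= d k -> ~ (b k <= x <= c k) -> U x y = x) /\
    (b k <= x <= c k -> a k <= y <= d k -> ~ (b k <= y <= c k) -> U x y = y) /\
    (inB (b k) -> inC (c k) -> sq_edge k x y -> x + y < b k + c k -> U x y = Rmin x y) /\
    (inB (b k) -> inC (c k) -> sq_edge k x y -> x + y > b k + c k -> U x y = Rmax x y) /\
    (inB (b k) -> inC (c k) -> ((x = b k /\ y = c k) \/ (x = c k /\ y = b k)) ->
       U x y = nval k) /\
    (inB (b k) -> ~ inC (c k) ->
       ((x = b k /\ b k <= y <= c k) \/ (y = b k /\ b k <= x <= c k)) -> U x y = Rmin x y) /\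
    (~ inB (b k) -> inC (c k) ->
       ((x = c k /\ b k <= y <= c k) \/ (y = c k /\ b k <= x <= c k)) -> U x y = Rmax x y).

End OS.

Definition irreducible (U : R -> R -> R) (e : R) : Prop :=
  forall (K : nat -> Prop) (a b c d : nat -> R) (W : nat -> R -> R -> R) (ew v : nat -> R),
    os_data_ok e K a b c d W ew ->
    v_ok K a b c d W v ->
    is_ordinal_sum e K a b c d W ew v U ->
    forall k, K k -> (a k < b k \/ c k < d k) ->
      a k = 0 /\ b k = e /\ c k = e /\ d k = 1.

(* Main.v *)
Require Import Defs.
From Stdlib Require Import Reals Lra Lia.
Open Scope R_scope.

Fixpoint ivl (f : nat -> R) (p q : R) (n : nat) : R * R :=
  match n with
  | O => (p + (q - p) / 4, q - (q - p) / 4)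
  | S m => let (l, r) := ivl f p q m in
           if Rle_dec (f m) ((l + r) / 2) then (l + 2 * (r - l) / 3, r)
           else (l, l + (r - l) / 3)
  end.

Lemma ivl_lt f p q n : p < q -> fst (ivl f p q n) < snd (ivl f p q n).
Proof.
  intro Hpq. induction n as [|n IH].
  - simpl. lra.
  - simpl in IH |- *.
    destruct (ivl f p q n) as [l r]. simpl in IH.
    destruct (Rle_dec (f n) ((l + r) / 2)); simpl; lra.
Qed.

Lemma ivl_mono f p q n : p < q ->
  fst (ivl f p q n) <= fst (ivl f p q (S n)) /\ snd (ivl f p q (S n)) <= snd (ivl f p q n)
  /\ (f n < fst (ivl f p q (S n)) \/ snd (ivl f p q (S n)) < f n).
Proof.
  intro Hpq. pose proof (ivl_lt f p q n Hpq) as Hl.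
  simpl. destruct (ivl f p q n) as [l r]. simpl in Hl.
  destruct (Rle_dec (f n) ((l + r) / 2)); simpl; lra.
Qed.

Lemma ivl_mono_k f p q n k : p < q ->
  fst (ivl f p q n) <= fst (ivl f p q (n + k)) /\ snd (ivl f p q (n + k)) <= snd (ivl f p q n).
Proof.
  intro Hpq. induction k as [|k IH].
  - rewrite Nat.add_0_r. lra.
  - rewrite Nat.add_succ_r. pose proof (ivl_mono f p q (n + k) Hpq). lra.
Qed.

Lemma ivl_le f p q m n : p < q -> fst (ivl f p q m) <= snd (ivl f p q n).
Proof.
  intro Hpq. destruct (Nat.le_ge_cases m n) as [H|H].
  - replace n with (m + (n - m))%nat by lia.
    pose proof (ivl_mono_k f p q m (n - m) Hpq).
    pose proof (ivl_lt f p q (m + (n - m)) Hpq). lra.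
  - replace m with (n + (m - n))%nat by lia.
    pose proof (ivl_mono_k f p q n (m - n) Hpq).
    pose proof (ivl_lt f p q (n + (m - n)) Hpq). lra.
Qed.

Lemma uncount (f : nat -> R) (p q : R) : p < q ->
  exists x, p < x < q /\ forall n, f n <> x.
Proof.
  intro Hpq.
  set (E := fun y => exists m, y = fst (ivl f p q m)).
  assert (Hb : bound E).
  { exists (snd (ivl f p q 0)). intros y [m ->]. apply ivl_le; auto. }
  assert (He : exists y, E y) by (exists (fst (ivl f p q 0)); exists 0%nat; auto).
  destruct (completeness E Hb He) as [x [Hub Hlub]].
  assert (Hge : forall m, fst (ivl f p q m) <= x) by (intro m; apply Hub; exists m; auto).
  assert (Hle : forall n, x <= snd (ivl f p q n)).
  { intro n. apply Hlub. intros y [m ->]. apply ivl_le; auto. }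
  exists x. split.
  - pose proof (Hge 0%nat). pose proof (Hle 0%nat). simpl in *. lra.
  - intros n Hn. pose proof (ivl_mono f p q n Hpq). pose proof (Hge (S n)).
    pose proof (Hle (S n)). lra.
Qed.

Lemma cl2 e K a b c d W ew v U :
  is_ordinal_sum e K a b c d W ew v U ->
  forall k x y, K k -> inI x -> inI y -> b k <= y <= c k -> a k <= x <= d k ->
  ~ (b k <= x <= c k) -> U x y = x.
Proof.
  intros HOS k x y Hk Hx Hy H1 H2 H3.
  destruct (HOS x y Hx Hy) as [_ [_ H]]. destruct (H k Hk) as [_ [H4 _]]. auto.
Qed.

Lemma W11 W e : uninorm W e -> W 1 1 = 1.
Proof.
  intros [He [Hcl [_ [_ [_ [Hm2 Hn]]]]]].
  assert (I1 : inI 1) by (unfold inI; lra).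
  pose proof (Hm2 1 e 1 I1 He I1 (proj2 He)).
  destruct (Hn 1 I1) as [_ H1]. destruct (Hcl 1 1 I1 I1). lra.
Qed.

Lemma W00 W e : uninorm W e -> W 0 0 = 0.
Proof.
  intros [He [Hcl [_ [_ [_ [Hm2 Hn]]]]]].
  assert (I0 : inI 0) by (unfold inI; lra).
  pose proof (Hm2 0 0 e I0 I0 He (proj1 He)).
  destruct (Hn 0 I0) as [_ H1]. destruct (Hcl 0 0 I0 I0). lra.
Qed.

Lemma idem_d e K a b c d W ew v U :
  os_data_ok e K a b c d W ew -> is_ordinal_sum e K a b c d W ew v U ->
  forall k, K k -> c k < d k -> U (d k) (d k) = d k.
Proof.
  intros [Hab [Hcd [_ [_ [_ [_ [_ [HW _]]]]]]]] HOS k Hk Hlt.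
  destruct (Hab k Hk). destruct (Hcd k Hk).
  destruct (HW k Hk) as [Hu [_ [_ Hew]]]. specialize (Hew Hlt).
  assert (Hd : inI (d k)) by (unfold inI; lra).
  destruct (HOS _ _ Hd Hd) as [_ [_ HH]]. destruct (HH k Hk) as [Ht _].
  rewrite Ht by (unfold inHalf; lra).
  unfold transport, tr_inv.
  destruct (Rlt_dec (d k) (b k)); [lra|].
  replace (1 - (d k - d k) * (1 - ew k) / (d k - c k)) with 1 by (field; lra).
  rewrite (W11 _ _ Hu). unfold tr_fwd.
  destruct (Rlt_dec 1 (ew k)); [lra|].
  destruct (Req_EM_T 1 (ew k)); [lra|]. field. lra.
Qed.

Lemma idem_a e K a b c d W ew v U :
  os_data_ok e K a b c d W ew -> is_ordinal_sum e K a b c d W ew v U ->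
  forall k, K k -> a k < b k -> U (a k) (a k) = a k.
Proof.
  intros [Hab [Hcd [_ [_ [_ [_ [_ [HW _]]]]]]]] HOS k Hk Hlt.
  destruct (Hab k Hk). destruct (Hcd k Hk).
  destruct (HW k Hk) as [Hu [_ [Hew _]]]. specialize (Hew Hlt).
  assert (Hd : inI (a k)) by (unfold inI; lra).
  destruct (HOS _ _ Hd Hd) as [_ [_ HH]]. destruct (HH k Hk) as [Ht _].
  rewrite Ht by (unfold inHalf; lra).
  unfold transport, tr_inv.
  destruct (Rlt_dec (a k) (b k)); [|lra].
  replace (ew k * (a k - a k) / (b k - a k)) with 0 by (field; lra).
  rewrite (W00 _ _ Hu). unfold tr_fwd.
  destruct (Rlt_dec 0 (ew k)); [|lra]. field. lra.
Qed.

Lemma case_min U e K a b c d W ew v :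
 0 < e < 1 ->
 (forall x y, e < x < 1 -> 0 < y < e -> U x y = y) ->
 (forall x, 0 < x <= 1 -> U x 1 = 1) ->
 (forall x, e < x < 1 -> ~ idempotent_point U x) ->
 os_data_ok e K a b c d W ew -> is_ordinal_sum e K a b c d W ew v U ->
 forall k, K k -> (a k < b k \/ c k < d k) -> a k = 0 /\ b k = e /\ c k = e /\ d k = 1.
Proof.
  intros He HM HN1 Hnid Hok HOS.
  pose proof Hok as [Hab [Hcd [Hdab [Hdcd [Hcab [Hccd [Hord _]]]]]]].
  assert (C2 := cl2 _ _ _ _ _ _ _ _ _ _ HOS).
  assert (Step1 : forall k, K k -> c k < d k -> d k = 1).
  { intros k Hk Hlt. pose proof (idem_d _ _ _ _ _ _ _ _ _ _ Hok HOS k Hk Hlt).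
    pose proof (Hab k Hk). pose proof (Hcd k Hk).
    destruct (Rlt_dec (d k) 1) as [Hl|Hl]; [|lra].
    exfalso. apply (Hnid (d k)); [lra|auto]. }
  assert (Full : forall k, K k -> c k < d k -> a k = 0 /\ b k = e /\ c k = e /\ d k = 1).
  { intros k Hk Hlt. pose proof (Hab k Hk). pose proof (Hcd k Hk).
    assert (Hd1 : d k = 1) by auto.
    assert (Hbe : b k = e).
    { destruct (Rlt_dec (b k) e) as [Hl|Hl]; [|lra]. exfalso.
      set (y := (b k + e) / 2). set (x := (c k + 1) / 2).
      assert (E1 : U x y = x) by (apply (C2 k); [exact Hk| ..]; unfold inI, x, y in *; lra).
      assert (E2 : U x y = y) by (apply HM; unfold x, y in *; lra).
      unfold x, y in *; lra. }
    assert (Hce : c k = e).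
    { destruct (Rlt_dec e (c k)) as [Hl|Hl]; [|lra]. exfalso.
      destruct (uncount c e (c k) Hl) as [x [Hx Hn]].
      destruct (Hccd x ltac:(lra)) as [i [Hi Hci]].
      pose proof (Hcd i Hi).
      destruct (Rlt_dec (c i) (d i)) as [Hl2|Hl2].
      - assert (d i = 1) by auto.
        assert (i <> k) by (intro; subst; lra).
        destruct (Rle_dec (c i) (c k)).
        + apply (Hdcd k i Hk Hi ltac:(auto) ((c k + 1) / 2)); lra.
        + apply (Hdcd k i Hk Hi ltac:(auto) ((c i + 1) / 2)); lra.
      - apply (Hn i). lra. }
    assert (Ha0 : a k = 0).
    { destruct (Rlt_dec 0 (a k)) as [Hl|Hl]; [|lra]. exfalso.
      destruct (uncount b 0 (a k) Hl) as [x [Hx Hn]].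
      destruct (Hcab x ltac:(lra)) as [i [Hi Hai]].
      pose proof (Hab i Hi). pose proof (Hcd i Hi).
      destruct (Rlt_dec (a i) (b i)) as [Hl2|Hl2].
      - assert (i <> k) by (intro; subst; lra).
        assert (Hbi : b i <= a k).
        { destruct (Rle_dec (b i) (a k)) as [|Hn2]; [auto|exfalso].
          destruct (Rle_dec (b i) (b k)).
          + apply (Hdab k i Hk Hi ltac:(auto) ((a k + b i) / 2)); lra.
          + apply (Hdab k i Hk Hi ltac:(auto) ((a k + b k) / 2)); lra. }
        apply (Hord k i Hk Hi) in Hbi.
        set (t := (a i + b i) / 2).
        assert (E1 : U t 1 = t) by (apply (C2 i); [exact Hi| ..]; unfold inI, t in *; lra).
        assert (E2 : U t 1 = 1) by (apply HN1; unfold t in *; lra).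
        unfold t in *; lra.
      - apply (Hn i). lra. }
    auto. }
  intros k Hk [Hlt|Hlt]; [|auto].
  pose proof (Hab k Hk). pose proof (Hcd k Hk).
  destruct (Rlt_dec (c k) (d k)) as [Hl|Hl]; [auto|].
  exfalso. destruct (uncount c e 1 ltac:(lra)) as [x [Hx Hn]].
  destruct (Hccd x ltac:(lra)) as [i [Hi Hci]].
  pose proof (Hcd i Hi).
  destruct (Rlt_dec (c i) (d i)) as [Hl2|Hl2].
  - destruct (Full i Hi Hl2) as [A1 [A2 [A3 A4]]].
    assert (i <> k) by (intro; subst; lra).
    apply (Hdab k i Hk Hi ltac:(auto) ((a k + b k) / 2)); lra.
  - apply (Hn i). lra.
Qed.

Lemma case_max U e K a b c d W ew v :
 0 < e < 1 ->
 (forall x y, 0 < x < e -> e < y < 1 -> U x y = y) ->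
 (forall x, 0 <= x < 1 -> U x 0 = 0) ->
 (forall x, 0 < x < e -> ~ idempotent_point U x) ->
 os_data_ok e K a b c d W ew -> is_ordinal_sum e K a b c d W ew v U ->
 forall k, K k -> (a k < b k \/ c k < d k) -> a k = 0 /\ b k = e /\ c k = e /\ d k = 1.
Proof.
  intros He HM HN0 Hnid Hok HOS.
  pose proof Hok as [Hab [Hcd [Hdab [Hdcd [Hcab [Hccd [Hord _]]]]]]].
  assert (C2 := cl2 _ _ _ _ _ _ _ _ _ _ HOS).
  assert (Step1 : forall k, K k -> a k < b k -> a k = 0).
  { intros k Hk Hlt. pose proof (idem_a _ _ _ _ _ _ _ _ _ _ Hok HOS k Hk Hlt).
    pose proof (Hab k Hk). pose proof (Hcd k Hk).
    destruct (Rlt_dec 0 (a k)) as [Hl|Hl]; [|lra].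
    exfalso. apply (Hnid (a k)); [lra|auto]. }
  assert (Full : forall k, K k -> a k < b k -> a k = 0 /\ b k = e /\ c k = e /\ d k = 1).
  { intros k Hk Hlt. pose proof (Hab k Hk). pose proof (Hcd k Hk).
    assert (Ha0 : a k = 0) by auto.
    assert (Hce : c k = e).
    { destruct (Rlt_dec e (c k)) as [Hl|Hl]; [|lra]. exfalso.
      set (x := b k / 2). set (y := (e + c k) / 2).
      assert (E1 : U x y = x) by (apply (C2 k); [exact Hk| ..]; unfold inI, x, y in *; lra).
      assert (E2 : U x y = y) by (apply HM; unfold x, y in *; lra).
      unfold x, y in *; lra. }
    assert (Hbe : b k = e).
    { destruct (Rlt_dec (b k) e) as [Hl|Hl]; [|lra]. exfalso.
      destruct (uncount b (b k) e Hl) as [x [Hx Hn]].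
      destruct (Hcab x ltac:(lra)) as [i [Hi Hai]].
      pose proof (Hab i Hi).
      destruct (Rlt_dec (a i) (b i)) as [Hl2|Hl2].
      - assert (a i = 0) by auto.
        assert (i <> k) by (intro; subst; lra).
        destruct (Rle_dec (b i) (b k)).
        + apply (Hdab k i Hk Hi ltac:(auto) (b i / 2)); lra.
        + apply (Hdab k i Hk Hi ltac:(auto) (b k / 2)); lra.
      - apply (Hn i). lra. }
    assert (Hd1 : d k = 1).
    { destruct (Rlt_dec (d k) 1) as [Hl|Hl]; [|lra]. exfalso.
      destruct (uncount d (d k) 1 Hl) as [x [Hx Hn]].
      destruct (Hccd x ltac:(lra)) as [i [Hi Hci]].
      pose proof (Hab i Hi). pose proof (Hcd i Hi).
      destruct (Rlt_dec (c i) (d i)) as [Hl2|Hl2].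
      - assert (i <> k) by (intro; subst; lra).
        assert (Hci2 : d k <= c i).
        { destruct (Rle_dec (d k) (c i)) as [|Hn2]; [auto|exfalso].
          destruct (Rle_dec (c i) (c k)).
          + apply (Hdcd k i Hk Hi ltac:(auto) ((c k + d k) / 2)); lra.
          + apply (Hdcd k i Hk Hi ltac:(auto) ((c i + d k) / 2)); lra. }
        apply (Hord k i Hk Hi) in Hci2.
        set (t := (c i + d i) / 2).
        assert (E1 : U t 0 = t) by (apply (C2 i); [exact Hi| ..]; unfold inI, t in *; lra).
        assert (E2 : U t 0 = 0) by (apply HN0; unfold t in *; lra).
        unfold t in *; lra.
      - apply (Hn i). lra. }
    auto. }
  intros k Hk [Hlt|Hlt]; [auto|].
  pose proof (Hab k Hk). pose proof (Hcd k Hk).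
  destruct (Rlt_dec (a k) (b k)) as [Hl|Hl]; [auto|].
  exfalso. destruct (uncount b 0 e ltac:(lra)) as [x [Hx Hn]].
  destruct (Hcab x ltac:(lra)) as [i [Hi Hai]].
  pose proof (Hab i Hi).
  destruct (Rlt_dec (a i) (b i)) as [Hl2|Hl2].
  - destruct (Full i Hi Hl2) as [A1 [A2 [A3 A4]]].
    assert (i <> k) by (intro; subst; lra).
    apply (Hdcd k i Hk Hi ltac:(auto) ((c k + d k) / 2)); lra.
  - apply (Hn i). lra.
Qed.

Lemma e1_eq U e U1 e1 : 0 < e < 1 -> uninorm U e -> uninorm U1 e1 ->
  (forall x y, 0 < x < 1 -> 0 < y < 1 -> U x y = U1 x y) -> e1 = e.
Proof.
  intros He [_ [_ [_ [_ [_ [_ Hn]]]]]] [He1 [_ [_ [_ [Hm1 [_ Hn1]]]]]] Heq.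
  unfold inI in He1.
  assert (HeI : inI e) by (unfold inI; lra).
  destruct (Rlt_dec 0 e1) as [H0|H0]; destruct (Rlt_dec e1 1) as [H1|H1].
  - assert (Hi : inI e1) by (unfold inI; lra).
    pose proof (Heq e e1 He (conj H0 H1)).
    destruct (Hn e1 Hi) as [A _]. destruct (Hn1 e HeI) as [_ B]. lra.
  - set (z := (1 + e) / 2).
    assert (Hz : inI z) by (unfold inI, z; lra).
    pose proof (Heq z e ltac:(unfold z; lra) He).
    destruct (Hn z Hz) as [_ A].
    pose proof (Hm1 z e1 e Hz ltac:(unfold inI; lra) HeI ltac:(unfold z; lra)).
    destruct (Hn1 e HeI) as [B _]. unfold z in *. lra.
  - set (z := e / 2).
    assert (Hz : inI z) by (unfold inI, z; lra).
    pose proof (Heq z e ltac:(unfold z; lra) He).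
    destruct (Hn z Hz) as [_ A].
    pose proof (Hm1 e1 z e ltac:(unfold inI; lra) Hz HeI ltac:(unfold z; lra)).
    destruct (Hn1 e HeI) as [B _]. unfold z in *. lra.
  - lra.
Qed.

Theorem proposition9 (U : R -> R -> R) (e : R) :
  0 < e < 1 ->
  uninorm U e ->
  in_calU U e ->
  ((in_Nmin U /\ (forall x, e < x < 1 -> ~ idempotent_point U x)) \/
   (in_Nmax U /\ (forall x, 0 < x < e -> ~ idempotent_point U x))) ->
  irreducible U e.
Proof.
  intros He Hu _ [[[[HN0 HN1] [U1 [e1 [[Hu1 Hmin] Heq]]]] Hid] | [[[HN0 HN1] [U1 [e1 [[Hu1 Hmax] Heq]]]] Hid]];
  intros K a b c d W ew v Hok _ HOS;
  pose proof (e1_eq U e U1 e1 He Hu Hu1 Heq) as E; subst e1.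
  - apply (case_min U e K a b c d W ew v He); auto.
    intros x y Hx Hy. rewrite Heq by lra. rewrite Hmin by (unfold inI; lra).
    apply Rmin_right. lra.
  - apply (case_max U e K a b c d W ew v He); auto.
    intros x y Hx Hy. rewrite Heq by lra. rewrite Hmax by (unfold inI; lra).
    apply Rmax_right. lra.
Qed.
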